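(* Let $T$ be a left-linear term rewriting system, $\mathcal{A}$ a reduction sequence of $T$ and $\psi$ a stepwise-or-normal proof term that denotes $\mathcal{A}$. Then $mind(\psi)=mind(\mathcal{A})$; $\psi$ is convergent if and only if $\mathcal{A}$ is convergent; and in that case $tgt(\psi)=tgt(\mathcal{A})$.
   Context: Setting. $T=(\Sigma,R)$: $\Sigma$ finite; rules $\mu:l\to r$ with $l$ finite, non-variable, linear, variables of $r$ among those of $l$; terms finite or infinite; $d(t,u)=0$ if $t=u$, else $2^{-k}$, $k$ the least depth where they differ. Reduction sequences. A reduction step $a=\langle t,p,\mu,\sigma\rangle$ has $t|_p=\sigma l$, $src(a)=t$, $tgt(a)=t[\sigma r]_p$, depth $|p|$. A reduction sequence is $id_t$ (length $0$, source and target $t$) or $\langle a_\alpha\rangle_{\alpha<\beta}$, $\beta>0$, with $src(a_{\alpha+1})=tgt(a_\alpha)$ for $\alpha+1<\beta$, and for each limit $\beta_0<\beta$: $\lim_{\alpha\to\beta_0}tgt(a_\alpha)$ exists and equals $src(a_{\beta_0})$, and depths of $a_\alpha$ tend to infinity as $\alpha\to\beta_0$ (for every $n$ there is $\beta'<\beta_0$ with depth $>n$ for $\beta'<\alpha<\beta_0$). It is convergent iff it is empty, or $\beta$ is a successor, or $\beta$ is a limit and the limit-existence and depth conditions also hold at $\beta$. Its target (for convergent sequences) is $tgt(a_{\beta'})$ if $\beta=\beta'+1$ and $\lim_{\alpha\to\beta}tgt(a_\alpha)$ if $\beta$ is a limit. $mind(\mathcal{A})$ is $\omega$ for $id_t$,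 otherwise the minimum depth of its steps. Proof terms. $\Sigma^R$ extends $\Sigma$ by a symbol $\mu$ of arity $n$ per rule ($n$ distinct variables of $l$). A one-step is a closed term over $\Sigma^R$ with a single rule-symbol occurrence $\mu(t_1,..,t_n)$ at position $p$; source/target replace it by $l[t_1,..,t_n]$ / $r[t_1,..,t_n]$; $mind=|p|$; one-steps are convergent. Stepwise proof terms: one-steps; $\psi_1\cdot\psi_2$ with $tgt(\psi_1)=src(\psi_2)$ ($src=src(\psi_1)$, $tgt=tgt(\psi_2)$, convergent iff $\psi_2$ is, $mind=\min$); $\prod_{i<\omega}\psi_i=\psi_0\cdot(\psi_1\cdot\cdots)$ with all $\psi_i$ convergent and $tgt(\psi_i)=src(\psi_{i+1})$ ($src=src(\psi_0)$, $tgt=\lim_i tgt(\psi_i)$ if it exists, $mind=\min_i mind(\psi_i)$, convergent iff for each $k$, $mind(\psi_j)>k$ for all sufficiently large $j$). Stepwise-or-normal: stepwise, or a rule-free term $t\in\mathrm{Ter}^\infty(\Sigma)$ (then $src=tgt=t$, $mind=\omega$, convergent). Number of steps $|\psi|$ and components $\psi[\alpha]$ ($\alpha<|\psi|$): $|t|=0$; for a one-step $|\psi|=1$, $\psi[0]=\psi$; $|\psi_1\cdot\psi_2|=|\psi_1|+|\psi_2|$, component $\psi_1[\alpha]$ if $\alpha<|\psi_1|$ else $\psi_2[\beta]$ with $|\psi_1|+\beta=\alpha$; $|\prod\psi_i|=\sup_n(|\psi_0|+\dots+|\psi_n|)$, component $\psi_k[\gamma]$ for the unique $k,\gamma$ with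 $\alpha=|\psi_0|+\dots+|\psi_{k-1}|+\gamma$, $\gamma<|\psi_k|$. Denotation. A one-step $\psi$ denotes a step $a=\langle t,p,\mu,\sigma\rangle$ iff $src(\psi)=t$, $tgt(\psi)=tgt(a)$ and $\psi$ has symbol $\mu$ at $p$. $\psi$ denotes $\mathcal{A}$ iff $|\psi|$ equals the length of $\mathcal{A}$, $src(\psi)=src(\mathcal{A})$, and $\psi[\alpha]$ denotes the $\alpha$-th step of $\mathcal{A}$ for all $\alpha$ below the length. *)

(* Defs.v *)
From mathcomp Require Import all_boot.

Set Implicit Arguments.
Unset Strict Implicit.
Unset Printing Implicit Defensive.

(* Finite or infinite terms as labelled trees: a term over a symbol set S
   is a map from positions (sequences of child indices; [::] is the root)
   to optional labels (None = not a position of the term).               *)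
Definition tm (S : Type) := seq nat -> option S.

Definition wf_tm (S : Type) (ar : S -> nat) (t : tm S) : Prop :=
  t [::] <> None /\
  forall p i, t (rcons p i) <> None <-> exists s, t p = Some s /\ (i < ar s)%N.

Definition subterm (S : Type) (t : tm S) (p : seq nat) : tm S :=
  fun q => t (p ++ q).

Definition replace (S : Type) (t : tm S) (p : seq nat) (u : tm S) : tm S :=
  fun q => if take (size p) q == p then u (drop (size p) q) else t q.

(* t and u agree at all positions of depth <= k, i.e. d(t,u) < 2^-k *)
Definition agree (S : Type) (k : nat) (t u : tm S) : Prop :=
  forall q, (size q <= k)%N -> t q = u q.

Inductive natinf := Fin of nat | Omega.

Section TRS.
Variables (F : finType) (arF : F -> nat).

(* terms with variables (variables are natural numbers, arity 0) *)
Definition arV (s : F + nat) : nat :=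
  match s with inl f => arF f | inr _ => 0 end.

(* A rule l -> r; rvars is the (duplicate-free) list of the variables of l,
   fixing the order of the arguments of the rule symbol. *)
Record rule := Rule { lhs : tm (F + nat); rhs : tm (F + nat); rvars : seq nat }.

Definition is_var_occ (t : tm (F + nat)) (x : nat) : Prop :=
  exists q, t q = Some (inr x).

Definition rule_ok (mu : rule) : Prop :=
  wf_tm arV (lhs mu) /\ wf_tm arV (rhs mu) /\
  (exists n, forall q, lhs mu q <> None -> (size q <= n)%N) /\
  (exists f, lhs mu [::] = Some (inl f)) /\
  (forall q q' x, lhs mu q = Some (inr x) -> lhs mu q' = Some (inr x) -> q = q') /\
  (forall x, is_var_occ (rhs mu) x -> is_var_occ (lhs mu) x) /\
  uniq (rvars mu) /\ (forall x, x \in rvars mu <-> is_var_occ (lhs mu) x).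

Fixpoint subst_at (r : tm (F + nat)) (sigma : nat -> tm F) (q p : seq nat)
  : option F :=
  match r q with
  | Some (inl f) =>
      match p with
      | [::] => Some f
      | i :: p' => subst_at r sigma (rcons q i) p'
      end
  | Some (inr x) => sigma x p
  | None => None
  end.

Definition subst (r : tm (F + nat)) (sigma : nat -> tm F) : tm F :=
  fun p => subst_at r sigma [::] p.

Variables (Rl : Type) (R : Rl -> rule).

Definition TRS : Prop := forall mu, rule_ok (R mu).

Record step := Step
  { st_src : tm F; st_pos : seq nat; st_rule : Rl; st_sub : nat -> tm F }.

Definition step_valid (a : step) : Prop :=
  wf_tm arF (st_src a) /\ (forall x, wf_tm arF (st_sub a x)) /\
  subterm (st_src a) (st_pos a) = subst (lhs (R (st_rule a))) (st_sub a).

Definition step_tgt (a : step) : tm F :=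
  replace (st_src a) (st_pos a) (subst (rhs (R (st_rule a))) (st_sub a)).

Definition depth (a : step) : nat := size (st_pos a).

(* A reduction sequence: its steps are indexed by a well-ordered type
   rs_I (whose order type is the length beta); rs_start is its source
   (the term t for id_t, and src(a_0) otherwise). *)
Record redseq := RedSeq
  { rs_I : Type; rs_lt : rs_I -> rs_I -> Prop;
    rs_step : rs_I -> step; rs_start : tm F }.

Section RS.
Variable A : redseq.
Let I := rs_I A.
Let lt := @rs_lt A.
Let a := @rs_step A.

Definition strict_wellorder : Prop :=
  (forall x : I, ~ lt x x) /\
  (forall x y z : I, lt x y -> lt y z -> lt x z) /\
  (forall x y : I, x = y \/ lt x y \/ lt y x) /\
  well_founded lt.

Definition is_first (y : I) : Prop := ~ exists x, lt x y.
Definition is_last (y : I) : Prop := ~ exists x, lt y x.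
Definition is_succ (x y : I) : Prop := lt x y /\ ~ exists z, lt x z /\ lt z y.
Definition is_limit (y : I) : Prop := (exists x, lt x y) /\ ~ exists x, is_succ x y.

Definition conv_below (y : I) (u : tm F) : Prop :=
  forall k, exists b, lt b y /\ forall x, lt b x -> lt x y -> agree k (step_tgt (a x)) u.
Definition depth_below (y : I) : Prop :=
  forall n, exists b, lt b y /\ forall x, lt b x -> lt x y -> (n < depth (a x))%N.

Definition conv_top (u : tm F) : Prop :=
  forall k, exists b, forall x, lt b x -> agree k (step_tgt (a x)) u.
Definition depth_top : Prop :=
  forall n, exists b, forall x, lt b x -> (n < depth (a x))%N.

Definition is_redseq : Prop :=
  strict_wellorder /\
  wf_tm arF (rs_start A) /\
  (forall x, step_valid (a x)) /\
  (forall x, is_first x -> st_src (a x) = rs_start A) /\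
  (forall x y, is_succ x y -> st_src (a y) = step_tgt (a x)) /\
  (forall y, is_limit y -> conv_below y (st_src (a y)) /\ depth_below y).

Definition rs_empty : Prop := forall x : I, False.
Definition rs_succ_len : Prop := exists m, is_last m.
Definition rs_limit_len : Prop := (exists x : I, True) /\ ~ rs_succ_len.

Definition seq_conv : Prop :=
  rs_empty \/ rs_succ_len \/
  (rs_limit_len /\ (exists u, conv_top u) /\ depth_top).

Definition seq_tgt (u : tm F) : Prop :=
  seq_conv /\
  ((rs_empty /\ u = rs_start A) \/
   (exists m, is_last m /\ u = step_tgt (a m)) \/
   (rs_limit_len /\ conv_top u)).

Definition seq_mind (m : natinf) : Prop :=
  (rs_empty /\ m = Omega) \/
  (exists n, m = Fin n /\ (exists x, depth (a x) = n) /\ forall x, (n <= depth (a x))%N).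
End RS.

(* Proof terms.  Sigma^R = F + Rl; the rule symbol mu has arity
   size (rvars (R mu)). *)
Definition arR (s : F + Rl) : nat :=
  match s with inl f => arF f | inr mu => size (rvars (R mu)) end.

Definition strip (s : tm (F + Rl)) : tm F :=
  fun q => match s q with Some (inl f) => Some f | _ => None end.

Definition is_onestep (s : tm (F + Rl)) (p : seq nat) : Prop :=
  wf_tm arR s /\ forall q, (exists mu, s q = Some (inr mu)) <-> q = p.

(* the substitution sending the i-th variable of l to the argument t_i *)
Definition os_args (s : tm (F + Rl)) (p : seq nat) (mu : Rl) : nat -> tm F :=
  fun x => strip (subterm s (rcons p (index x (rvars (R mu))))).

Definition os_src (s : tm (F + Rl)) (p : seq nat) : tm F :=
  match s p with
  | Some (inr mu) => replace (strip s) p (subst (lhs (R mu)) (os_args s p mu))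
  | _ => strip s
  end.

Definition os_tgt (s : tm (F + Rl)) (p : seq nat) : tm F :=
  match s p with
  | Some (inr mu) => replace (strip s) p (subst (rhs (R mu)) (os_args s p mu))
  | _ => strip s
  end.

(* Syntax of stepwise proof terms: one-steps, binary composition and
   infinite products prod_i psi_i (= psi_0 . (psi_1 . ...)). *)
Inductive spt :=
  | PStep of tm (F + Rl) & seq nat
  | PComp of spt & spt
  | PProd of (nat -> spt).

Fixpoint pt_src (psi : spt) : tm F :=
  match psi with
  | PStep s p => os_src s p
  | PComp a _ => pt_src a
  | PProd f => pt_src (f 0%N)
  end.

(* pt_tgt psi u : the target of psi exists and is u *)
Fixpoint pt_tgt (psi : spt) (u : tm F) : Prop :=
  match psi with
  | PStep s p => u = os_tgt s p
  | PComp _ b => pt_tgt b u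
  | PProd f => forall k, exists N, forall i, (N <= i)%N ->
                 exists v, pt_tgt (f i) v /\ agree k v u
  end.

Fixpoint pt_mind (psi : spt) (m : nat) : Prop :=
  match psi with
  | PStep _ p => m = size p
  | PComp a b => exists ma mb, pt_mind a ma /\ pt_mind b mb /\ m = minn ma mb
  | PProd f => (exists i, pt_mind (f i) m) /\
               forall i m', pt_mind (f i) m' -> (m <= m')%N
  end.

Fixpoint pt_conv (psi : spt) : Prop :=
  match psi with
  | PStep _ _ => True
  | PComp _ b => pt_conv b
  | PProd f => forall k, exists N, forall j, (N <= j)%N ->
                 forall m, pt_mind (f j) m -> (k < m)%N
  end.

Fixpoint pt_wf (psi : spt) : Prop :=
  match psi with
  | PStep s p => is_onestep s p
  | PComp a b => pt_wf a /\ pt_wf b /\ pt_tgt a (pt_src b)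
  | PProd f => forall i, pt_wf (f i) /\ pt_conv (f i) /\
                         pt_tgt (f i) (pt_src (f i.+1))
  end.

(* Steps psi[alpha]: indexed by Idx psi, ordered by idx_lt; the order type
   of (Idx psi, idx_lt) is |psi| (ordinal sum for composition, sup of the
   partial sums = lexicographic sum over nat for products). *)
Fixpoint Idx (psi : spt) : Type :=
  match psi with
  | PStep _ _ => unit
  | PComp a b => (Idx a + Idx b)%type
  | PProd f => {n : nat & Idx (f n)}
  end.

Fixpoint idx_lt (psi : spt) : Idx psi -> Idx psi -> Prop :=
  match psi return Idx psi -> Idx psi -> Prop with
  | PStep _ _ => fun _ _ => False
  | PComp a b => fun x y =>
      match x, y with
      | inl x', inl y' => idx_lt x' y'
      | inl _, inr _ => True
      | inr _, inl _ => False
      | inr x', inr y' => idx_lt x' y'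
      end
  | PProd f => fun x y =>
      (projT1 x < projT1 y)%N \/
      exists e : projT1 x = projT1 y,
        idx_lt (eq_rect _ (fun n => Idx (f n)) (projT2 x) _ e) (projT2 y)
  end.

Fixpoint component (psi : spt) : Idx psi -> (tm (F + Rl) * seq nat) :=
  match psi return Idx psi -> (tm (F + Rl) * seq nat) with
  | PStep s p => fun _ => (s, p)
  | PComp a b => fun x => match x with inl x' => component x' | inr y' => component y' end
  | PProd f => fun x => component (projT2 x)
  end.

Inductive sorn :=
  | SStep of spt
  | SNorm of tm F.

Definition sorn_wf (psi : sorn) : Prop :=
  match psi with SStep p => pt_wf p | SNorm t => wf_tm arF t end.

Definition sorn_src (psi : sorn) : tm F :=
  match psi with SStep p => pt_src p | SNorm t => t end.

Definition sorn_tgt (psi : sorn) (u : tm F) : Prop :=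
  match psi with SStep p => pt_tgt p u | SNorm t => u = t end.

Definition sorn_mind (psi : sorn) (m : natinf) : Prop :=
  match psi with
  | SStep p => exists n, m = Fin n /\ pt_mind p n
  | SNorm _ => m = Omega
  end.

Definition sorn_conv (psi : sorn) : Prop :=
  match psi with SStep p => pt_conv p | SNorm _ => True end.

Definition sIdx (psi : sorn) : Type :=
  match psi with SStep p => Idx p | SNorm _ => Empty_set end.

Definition sidx_lt (psi : sorn) : sIdx psi -> sIdx psi -> Prop :=
  match psi return sIdx psi -> sIdx psi -> Prop with
  | SStep p => @idx_lt p
  | SNorm _ => fun _ _ => False
  end.

Definition scomponent (psi : sorn) : sIdx psi -> (tm (F + Rl) * seq nat) :=
  match psi return sIdx psi -> (tm (F + Rl) * seq nat) with
  | SStep p => @component p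
  | SNorm _ => fun x => match x with end
  end.

Definition os_denotes (sp : tm (F + Rl) * seq nat) (a : step) : Prop :=
  os_src sp.1 sp.2 = st_src a /\ os_tgt sp.1 sp.2 = step_tgt a /\
  sp.1 (st_pos a) = Some (inr (st_rule a)).

(* psi denotes A: |psi| = length of A (order isomorphism of the index
   well-orders), same source, and psi[alpha] denotes the alpha-th step. *)
Definition denotes (psi : sorn) (A : redseq) : Prop :=
  exists f : sIdx psi -> rs_I A,
    bijective f /\
    (forall x y, sidx_lt x y <-> @rs_lt A (f x) (f y)) /\
    sorn_src psi = rs_start A /\
    forall x, os_denotes (scomponent x) (@rs_step A (f x)).

End TRS.

(* Main.v *)
Require Import Defs.
From mathcomp Require Import all_boot zify.
From Stdlib Require Import Classical FunctionalExtensionality ClassicalEpsilon.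

Set Implicit Arguments.
Unset Strict Implicit.
Unset Printing Implicit Defensive.

Lemma exists_min (T : Type) (h : T -> nat) (t : T) :
  exists m, (exists x, h x = m) /\ forall x, (m <= h x)%N.
Proof.
have H : forall n, (exists x, (h x <= n)%N) -> exists m, (exists x, h x = m) /\ forall x, (m <= h x)%N.
  elim=> [|n IH] [x Hx].
    exists 0; split; [exists x; lia| move=> y; lia].
  case: (classic (exists x, (h x <= n)%N)) => [/IH //|Hn].
  have Hall : forall y, ~ (h y <= n)%N by move=> y Hy; apply: Hn; exists y.
  exists n.+1; split.
    by exists x; have := Hall x; lia.
  by move=> y; have := Hall y; lia.
by apply: (H (h t)); exists t.
Qed.

Section S1.
Variables (F : finType) (arF : F -> nat) (Rl : Type) (R : Rl -> rule F).

Fixpoint first_idx (q : spt F Rl) : Idx q :=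
  match q return Idx q with
  | PStep _ _ => tt
  | PComp a _ => inl (first_idx a)
  | PProd f => existT _ 0 (first_idx (f 0))
  end.

Lemma pt_src_first (q : spt F Rl) :
  pt_src R q = os_src R (component (first_idx q)).1 (component (first_idx q)).2.
Proof. elim: q => //=. Qed.

Definition D (q : spt F Rl) (x : Idx q) : nat := size (component x).2.

Lemma mind_char (q : spt F Rl) : forall m,
  pt_mind q m <-> (exists x : Idx q, D x = m) /\ forall x : Idx q, (m <= D x)%N.
Proof.
elim: q => [s p|a IHa b IHb|f IH] m /=.
- split; [move=> ->; split; [by exists tt|by []] | by case=> [[[] <-]]].
- split.
  + case=> [ma [mb [/IHa [[xa Ea] Ba] [/IHb [[xb Eb] Bb] ->]]]].
    split.
    * case: (leqP ma mb) => H.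
      - by exists (inl xa); rewrite /D /= -/(D xa) Ea; lia.
      - by exists (inr xb); rewrite /D /= -/(D xb) Eb; lia.
    * case=> [x|x]; rewrite /D /=. 
      - have := Ba x; rewrite /D; lia.
      - have := Bb x; rewrite /D; lia.
  + case=> [[x Ex] Bx].
    have [ma [[xa Ea] Ba]] := exists_min (@D a) (first_idx a).
    have [mb [[xb Eb] Bb]] := exists_min (@D b) (first_idx b).
    exists ma, mb; split; first by apply/IHa; split; [exists xa|].
    split; first by apply/IHb; split; [exists xb|].
    have h1 := Bx (inl xa); have h2 := Bx (inr xb).
    rewrite /D /= -/(D xa) -/(D xb) in h1 h2.
    case: x Ex => x; rewrite /D /= -/(D x) => Ex.
    + have := Ba x; lia.
    + have := Bb x; lia.
- split.
  + case=> [[i /IH [[x Ex] _]] B]; split; first by exists (existT _ i x).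
    case=> j y; rewrite /D /= -/(D y).
    have [mj [[z Ez] Bz]] := exists_min (@D (f j)) (first_idx (f j)).
    have := B j mj; rewrite IH => /(_ (conj (ex_intro _ z Ez) Bz)).
    have := Bz y; lia.
  + case=> [[[i x] Ex] Bx]; rewrite /D /= -/(D x) in Ex; split.
    * exists i; apply/IH; split; first by exists x.
      by move=> y; have := Bx (existT _ i y).
    * move=> j m' /IH [[y Ey] _]; have := Bx (existT _ j y).
      by rewrite /D /= -/(D y) Ey.
Qed.

Lemma tgt_unique (q : spt F Rl) :
  forall u v, pt_tgt R q u -> pt_tgt R q v -> u = v.
Proof.
elim: q => [s p|a _ b IHb|f IH] u v /=.
- by move=> -> ->.
- exact: IHb.
- move=> Hu Hv; apply: functional_extensionality => r.
  have [N1 H1] := Hu (size r); have [N2 H2] := Hv (size r).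
  have [v1 [T1 A1]] := H1 (maxn N1 N2) (leq_maxl _ _).
  have [v2 [T2 A2]] := H2 (maxn N1 N2) (leq_maxr _ _).
  have E := IH _ _ _ T1 T2; subst v2.
  by rewrite -(A1 r (leqnn _)) (A2 r (leqnn _)).
Qed.

Lemma wf_comp (q : spt F Rl) :
  pt_wf arF R q -> forall x : Idx q, is_onestep arF R (component x).1 (component x).2.
Proof.
elim: q => [s p|a IHa b IHb|f IH] /=.
- by move=> H _.
- by case=> [Ha [Hb _]] [x|x]; [apply: IHa|apply: IHb].
- by move=> H [i x] /=; apply: IH; case: (H i).
Qed.

End S1.

Lemma agree_refl (S : Type) k (t : tm S) : agree k t t.
Proof. by []. Qed.
Lemma agree_sym (S : Type) k (t u : tm S) : agree k t u -> agree k u t.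
Proof. by move=> H q Hq; rewrite H. Qed.
Lemma agree_trans (S : Type) k (t u v : tm S) : agree k t u -> agree k u v -> agree k t v.
Proof. by move=> H1 H2 q Hq; rewrite H1 // H2. Qed.
Lemma agree_le (S : Type) k k' (t u : tm S) : (k' <= k)%N -> agree k t u -> agree k' t u.
Proof. by move=> Hk H q Hq; apply: H; apply: leq_trans Hk. Qed.

Section S2.
Variables (F : finType) (arF : F -> nat) (Rl : Type) (R : Rl -> rule F).
Variable (A : redseq F Rl).
Hypothesis HA : is_redseq arF R A.

Local Notation I := (rs_I A).
Local Notation lt := (@rs_lt _ _ A).
Local Notation a := (@rs_step _ _ A).
Local Notation tgt x := (step_tgt R (a x)).
Local Notation src x := (st_src (a x)).

Lemma agree_step (s : step F Rl) k : (k < depth s)%N -> agree k (step_tgt R s) (st_src s).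
Proof.
move=> Hk q Hq; rewrite /step_tgt /replace.
case: eqP => // E; exfalso.
have : size (take (size (st_pos s)) q) = size (st_pos s) by rewrite E.
rewrite size_take; move: Hk Hq; rewrite /depth; case: (ltnP (size (st_pos s)) (size q)); lia.
Qed.

Lemma lt_irr (x : I) : ~ lt x x.
Proof. by case: HA => [[H _] _]. Qed.
Lemma lt_trans (x y z : I) : lt x y -> lt y z -> lt x z.
Proof. by case: HA => [[_ [H _]] _]; apply: H. Qed.
Lemma lt_tri (x y : I) : x = y \/ lt x y \/ lt y x.
Proof. by case: HA => [[_ [_ [H _]]] _]. Qed.
Lemma lt_wf : well_founded lt.
Proof. by case: HA => [[_ [_ [_ H]]] _]. Qed.
Lemma H_succ (x y : I) : is_succ x y -> src y = tgt x.
Proof. by case: HA => [_ [_ [_ [_ [H _]]]]]; apply: H. Qed.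
Lemma H_lim (y : I) : is_limit y -> conv_below R y (src y).
Proof. by case: HA => [_ [_ [_ [_ [_ H]]]]] Hy; case: (H y Hy). Qed.

Lemma classify (y x : I) : lt x y ->
  (exists z, is_succ z y) \/ (is_limit y /\ forall m, lt m y -> exists w, lt m w /\ lt w y).
Proof.
move=> Hxy; case: (classic (exists z, is_succ z y)) => H; [by left|right].
split; first by split; [exists x|].
move=> m Hm; apply: NNPP => Hn; apply: H; exists m; split => // [[w Hw]]; apply: Hn; exists w.
Qed.

Lemma le_max (x y : I) : exists m, (m = x \/ lt x m) /\ (m = y \/ lt y m) /\ (m = x \/ m = y).
Proof.
case: (lt_tri x y) => [->|[H|H]].
- by exists y; auto.
- by exists y; auto.
- by exists x; auto.
Qed.

Lemma cauchy (c : I) k : (forall x, lt c x -> (k < depth (a x))%N) ->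
  forall y x, lt c x -> lt x y -> agree k (tgt x) (src y).
Proof.
move=> Hd y; elim: (lt_wf y) => {}y _ IH x Hcx Hxy.
case: (classify Hxy) => [[z [Hz Hnz]]|[Hl Hbet]].
- rewrite (H_succ (conj Hz Hnz)).
  case: (lt_tri x z) => [->|[H|H]].
  + exact: agree_refl.
  + apply: agree_trans (IH z Hz x Hcx H) _.
    apply: agree_sym; apply: agree_step; apply: Hd; exact: lt_trans Hcx H.
  + by exfalso; apply: Hnz; exists x.
- have [b' [Hb' Hc]] := H_lim Hl k.
  have [m [Hm1 [Hm2 Hm3]]] := le_max x b'.
  have Hmy : lt m y by case: Hm3 => ->.
  have [w [Hmw Hwy]] := Hbet m Hmy.
  have Hxw : lt x w by case: Hm1 => [<- //|H]; apply: lt_trans H Hmw.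
  have Hbw : lt b' w by case: Hm2 => [<- //|H]; apply: lt_trans H Hmw.
  apply: agree_trans (IH w Hwy x Hcx Hxw) _.
  apply: agree_trans (agree_sym (agree_step (Hd w (lt_trans Hcx Hxw)))) _.
  exact: Hc.
Qed.

Lemma cauchy2 (c : I) k : (forall x, lt c x -> (k < depth (a x))%N) ->
  forall y x, lt c x -> lt x y -> agree k (tgt x) (tgt y).
Proof.
move=> Hd y x Hcx Hxy; apply: agree_trans (cauchy Hd Hcx Hxy) _.
apply: agree_sym; apply: agree_step; apply: Hd; exact: lt_trans Hcx Hxy.
Qed.

Lemma L1 (y c : I) k : lt c y ->
  exists w, (w = c \/ lt c w) /\ lt w y /\ agree k (tgt w) (src y).
Proof.
move=> Hcy; case: (classify Hcy) => [[z [Hz Hnz]]|[Hl Hbet]].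
- exists z; split; last by split=> //; rewrite (H_succ (conj Hz Hnz)); apply: agree_refl.
  case: (lt_tri c z) => [->|[H|H]]; [by left|by right|].
  by exfalso; apply: Hnz; exists c.
- have [b' [Hb' Hc]] := H_lim Hl k.
  have [m [Hm1 [Hm2 Hm3]]] := le_max c b'.
  have Hmy : lt m y by case: Hm3 => ->.
  have [w [Hmw Hwy]] := Hbet m Hmy.
  have Hcw : lt c w by case: Hm1 => [<- //|H]; apply: lt_trans H Hmw.
  have Hbw : lt b' w by case: Hm2 => [<- //|H]; apply: lt_trans H Hmw.
  by exists w; split; [right|split => //; apply: Hc].
Qed.

Lemma conv_exists : depth_top A -> (forall b : I, exists x, lt b x) -> exists u, conv_top R A u.
Proof.
move=> Hd Hnl.
have Hex : forall k, exists bx : I * I, (forall x, lt bx.1 x -> (k < depth (a x))%N) /\ lt bx.1 bx.2.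
  move=> k; have [b Hb] := Hd k; have [x Hx] := Hnl b; by exists (b, x).
pose pr k := proj1_sig (constructive_indefinite_description _ (Hex k)).
have Hpr k : (forall x, lt (pr k).1 x -> (k < depth (a x))%N) /\ lt (pr k).1 (pr k).2.
  exact: (proj2_sig (constructive_indefinite_description _ (Hex k))).
exists (fun q => tgt (pr (size q)).2 q).
move=> k; exists (pr k).1 => x Hx q Hq.
set j := size q.
have [Dj Hj] := Hpr j; have [Dk _] := Hpr k.
have [c [Hc Dc]] : exists c, ((c = (pr j).1 \/ lt c (pr j).1) /\ (c = (pr k).1 \/ lt c (pr k).1)) /\
    forall z, lt c z -> (j < depth (a z))%N.
  case: (lt_tri (pr j).1 (pr k).1) => [E|[E|E]].
  - by exists (pr j).1; split; [split; [left|left]|].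
  - by exists (pr j).1; split; [split; [left|right]|].
  - exists (pr k).1; split; [split; [right|left]|] => // z Hz.
    have := Dk z Hz; lia.
have Hcx : lt c x by case: Hc => _ [->|H] //; apply: lt_trans H Hx.
have Hcj : lt c (pr j).2 by case: Hc => [[->|H] _] //; apply: lt_trans H Hj.
case: (lt_tri x (pr j).2) => [->//|[H|H]].
- by rewrite (cauchy2 Dc Hcx H) //; rewrite /j.
- by rewrite (cauchy2 Dc Hcj H) //; rewrite /j.
Qed.

End S2.

Section S3.
Variables (F : finType) (arF : F -> nat) (Rl : Type) (R : Rl -> rule F).
Variable (A : redseq F Rl).
Hypothesis HA : is_redseq arF R A.

Local Notation I := (rs_I A).
Local Notation lt := (@rs_lt _ _ A).
Local Notation a := (@rs_step _ _ A).
Local Notation tgt x := (step_tgt R (a x)).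
Local Notation src x := (st_src (a x)).

Definition target_A (u : tm F) : Prop :=
  (exists m, is_last m /\ u = tgt m) \/ (rs_limit_len A /\ conv_top R A u).

Lemma depth_D (p : spt F Rl) (e : Idx p -> I) : pt_wf arF R p ->
  (forall x, os_denotes R (component x) (a (e x))) -> forall x, depth (a (e x)) = D x.
Proof.
move=> Hwf Hden x; have [_ Hos] := wf_comp Hwf x.
have [_ [_ H3]] := Hden x.
have : st_pos (a (e x)) = (component x).2 by apply/Hos; eexists; exact: H3.
by rewrite /depth /D => ->.
Qed.

Lemma above_b (p : spt F Rl) (e : Idx p -> I) :
  (forall x z, lt (e x) z -> exists y, z = e y) ->
  forall b : I, exists y0, b = e y0 \/ lt b (e y0).
Proof.
move=> Hfin b; case: (lt_tri HA b (e (first_idx p))) => [E|[E|E]].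
- by exists (first_idx p); left.
- by exists (first_idx p); right.
- by have [y ->] := Hfin _ _ E; exists y; left.
Qed.

Lemma emb_main (p : spt F Rl) : forall e : Idx p -> I,
  pt_wf arF R p -> (forall x y, idx_lt x y <-> lt (e x) (e y)) ->
  (forall x z, lt (e x) z -> exists y, z = e y) ->
  (forall x, os_denotes R (component x) (a (e x))) ->
  (pt_conv p <-> depth_top A) /\ (pt_conv p -> forall u, pt_tgt R p u <-> target_A u).
Proof.
elim: p => [s q|b1 _ b2 IH2|g _] e Hwf Hord Hfin Hden.
- have Hlast : is_last (e tt).
    by move=> [z Hz]; have [[] E] := Hfin _ _ Hz; subst z; exact: (lt_irr HA Hz).
  split.
    split=> // _ n; exists (e tt) => x Hx; exfalso; apply: Hlast; by exists x.
  move=> _ u /=; have [_ [Ht _]] := Hden tt; rewrite /= in Ht; rewrite Ht; split.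
  + by move=> ->; left; exists (e tt).
  + case=> [[m [Hm ->]]|[[_ Hns] _]].
    * case: (lt_tri HA m (e tt)) => [->//|[E|E]]; exfalso.
      - by apply: Hm; exists (e tt).
      - by apply: Hlast; exists m.
    * by exfalso; apply: Hns; exists (e tt).
- case: Hwf => [_ [Hwf2 _]].
  apply: (IH2 (fun x => e (inr x))) => //.
  + by move=> x y; apply: (Hord (inr x) (inr y)).
  + move=> x z Hz; have [[y|y] E] := Hfin _ _ Hz; subst z.
    * by have := (Hord (inr x) (inl y)).2 Hz.
    * by exists y.
  + by move=> x; apply: (Hden (inr x)).
- pose blk i : Idx (PProd g) := existT (fun n => Idx (g n)) i (first_idx (g i)).
  have ltb : forall i j (y : Idx (g i)) (z : Idx (g j)), (i < j)%N ->
      lt (e (existT _ i y)) (e (existT _ j z)).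
    by move=> i j y z Hij; apply/Hord; left.
  have ltinv : forall x y : Idx (PProd g), idx_lt x y -> (projT1 x <= projT1 y)%N.
    by move=> [i x] [j y] /= [H|[E _]]; [apply: ltnW|rewrite E].
  have Hab := above_b Hfin.
  have Hbelow : forall b y0, (b = e y0 \/ lt b (e y0)) -> forall y, idx_lt y0 y -> lt b (e y).
    move=> b y0 Hb y Hy; have := (Hord _ _).1 Hy; case: Hb => [->//|H1 H2].
    exact: (lt_trans HA H1 H2).
  have Hdep := depth_D Hwf Hden.
  have Hsrc : forall i, src (e (blk i)) = pt_src R (g i).
    by move=> i; have [H1 _] := Hden (blk i); rewrite -H1 pt_src_first.
  have Hv : forall i v, pt_tgt R (g i) v <-> v = pt_src R (g i.+1).
    move=> i v; have [_ [_ Ht]] := Hwf i; split; first by move=> H; exact: tgt_unique H Ht.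
    by move=> ->.
  have Hconv : pt_conv (PProd g) <-> depth_top A.
    split.
    + move=> Hc; rewrite /depth_top /= => n; have [N HN] := Hc n; exists (e (blk N)) => z Hz.
      have [[j y'] E] := Hfin _ _ Hz; subst z.
      have HNj := ltinv _ _ ((Hord _ _).2 Hz); rewrite /= in HNj.
      rewrite Hdep.
      have [mj [[z Ez] Bz]] := exists_min (@D _ _ (g j)) (first_idx (g j)).
      have Hm : pt_mind (g j) mj by apply/mind_char; split; [exists z|].
      have := HN j HNj mj Hm; have := Bz y'; rewrite /D /=; lia.
    + move=> Hd k; have [b Hb] := Hd k; have [y0 Hy0] := Hab b.
      exists (projT1 y0).+1 => j Hj m /mind_char [[y' Ey'] _].
      have Hlt : lt b (e (existT _ j y')) by apply: (Hbelow _ _ Hy0); left.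
      by have := Hb _ Hlt; rewrite Hdep /D /= -Ey'.
  split=> // Hc u; have Hd := Hconv.1 Hc.
  have Hnl : forall b : I, exists x, lt b x.
    move=> b; have [y0 Hy0] := Hab b; exists (e (blk (projT1 y0).+1)).
    by apply: (Hbelow _ _ Hy0); left.
  have -> : target_A u <-> conv_top R A u.
    split; first by case=> [[m [Hm _]]|[_ H]] //; exfalso; have [x Hx] := Hnl m; apply: Hm; exists x.
    move=> H; right; split=> //; split; first by exists (e (blk 0)).
    by case=> m Hm; have [x Hx] := Hnl m; apply: Hm; exists x.
  rewrite /=; split.
  + move=> Ht k; have [N HN] := Ht k; have [b1 Hb1] := Hd k; have [y1 Hy1] := Hab b1.
    exists (e (blk (maxn N (projT1 y1)).+1)) => x Hx.
    have [[i y] E] := Hfin _ _ Hx; subst x.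
    have Hi := ltinv _ _ ((Hord _ _).2 Hx); rewrite /= in Hi.
    have Hb1x : lt b1 (e (existT _ i y)) by apply: (Hbelow _ _ Hy1); left; rewrite /=; lia.
    have Hxy : lt (e (existT _ i y)) (e (blk i.+1)) by apply: ltb.
    have H1 := cauchy HA Hb1 Hb1x Hxy; rewrite Hsrc in H1.
    have [v [/Hv Hvv Hvu]] := HN i ltac:(lia); subst v.
    exact: agree_trans H1 Hvu.
  + move=> Hct k; have [b Hb] := Hct k; have [y0 Hy0] := Hab b.
    exists (projT1 y0).+1 => i Hi; exists (pt_src R (g i.+1)); split; first by apply/Hv.
    have Hbc : lt b (e (blk (projT1 y0).+1)) by apply: (Hbelow _ _ Hy0); left.
    have Hcy : lt (e (blk (projT1 y0).+1)) (e (blk i.+1)) by apply: ltb; lia.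
    have [w [Hw1 [Hw2 Hw3]]] := L1 HA k Hcy.
    have Hbw : lt b w by case: Hw1 => [->//|H]; exact: (lt_trans HA Hbc H).
    rewrite Hsrc in Hw3; exact: agree_trans (agree_sym Hw3) (Hb w Hbw).
Qed.

End S3.

Theorem mainTheorem4 (F : finType) (arF : F -> nat) (Rl : Type)
  (R : Rl -> rule F) (HT : TRS arF R)
  (A : redseq F Rl) (HA : is_redseq arF R A)
  (psi : sorn F Rl) (Hpsi : sorn_wf arF R psi) (Hden : denotes R psi A) :
  (forall m, sorn_mind psi m <-> seq_mind A m) /\
  (sorn_conv psi <-> seq_conv R A) /\
  (seq_conv R A -> forall u, sorn_tgt R psi u <-> seq_tgt R A u).
Proof.
case: Hden => [f [[g fK gK] [Hord [Hsrc Hd]]]].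
case: psi Hpsi f g fK gK Hord Hsrc Hd => [p|t] Hwf f g fK gK Hord Hsrc Hd /=.
- have Hfin : forall x z, rs_lt (f x) z -> exists y, z = f y.
    by move=> x z _; exists (g z); rewrite gK.
  have [E1 E2] := emb_main HA Hwf Hord Hfin Hd.
  have Hne : ~ rs_empty A by rewrite /rs_empty /= => H; apply: (H (f (first_idx p))).
  have Hdep := depth_D Hwf Hd.
  have Hconv : pt_conv p <-> seq_conv R A.
    rewrite E1 /seq_conv /=; split.
    + move=> Hdt; case: (classic (exists m : rs_I A, is_last m)) => Hl.
      * by right; left.
      * right; right; split; first by split; [exists (f (first_idx p))|].
        split=> //; apply: (conv_exists HA Hdt) => b.
        apply: NNPP => Hn; apply: Hl; exists b => [[x Hx]]; apply: Hn; by exists x.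
    + case=> [//|[[m Hm]|[_ [_ H]]]] //.
      by rewrite /depth_top /= => n; exists m => x Hx; exfalso; apply: Hm; exists x.
  split; last split=> //.
  + move=> m; rewrite /seq_mind /=; split.
    * case=> n [-> /mind_char [[x Ex] Bx]]; right; exists n; split=> //; split.
        by exists (f x); rewrite Hdep.
      by move=> y; rewrite -(gK y) Hdep.
    * case=> [[H _]//|[n [-> [[y Ey] By]]]]; exists n; split=> //.
      apply/mind_char; split; first by exists (g y); rewrite -Hdep gK.
      by move=> x; rewrite -Hdep; apply: By.
  + move=> Hc u; have Hpc := Hconv.2 Hc; rewrite (E2 Hpc u) /seq_tgt /target_A /=.
    split; first by move=> H; split=> //; right.
    by case=> _ [[H _]|H].
- have He : rs_empty A by rewrite /rs_empty /= => x; case: (g x).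
  have Hc : seq_conv R A by left.
  split; last split.
  + move=> m; rewrite /seq_mind /=; split; first by move=> ->; left.
    by case=> [[_ ->]//|[n [_ [[x _] _]]]]; case: (g x).
  + by [].
  + move=> _ u; rewrite /seq_tgt /=; split.
    * by move=> ->; split=> //; left; split.
    * case=> _ [[_ ->]//|[[m _]|[[[x _] _] _]]]; case: (g m) || case: (g x).
Qed.
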